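(* Let $X=[x_1\ \cdots\ x_N]\in\mathbb{R}^{n\times N}$ with $\operatorname{rank}(X)=n$, let $m=\nu_n(X)$, and assume $N\ge s\,m$. For $\Lambda=[\eta_1\ \cdots\ \eta_s]\in\mathbb{R}^{n\times s}$ define $$g(\Lambda)=\min\Big\{\sum_{i=1}^s\|X_{J_i}^\top\eta_i\|_1:\ J_1,\ldots,J_s\subset\mathbb{T}\text{ pairwise disjoint},\ |J_i|\ge m\ \forall i\Big\},$$ $\|\Lambda\|_{2,\mathrm{col}}=\sum_{i=1}^s\|\eta_i\|_2$, and $D=\inf\{g(\Lambda):\|\Lambda\|_{2,\mathrm{col}}=1\}$. Then $$D\ge\gamma_m\ge\min_{I\subset\mathbb{T},\,|I|=m}\lambda_{\min}^{1/2}\big(X_IX_I^\top\big),$$ where $\gamma_m=\inf\{\|X_I^\top\eta\|_1:\eta\in\mathbb{R}^n,\ \|\eta\|_2=1,\ I\subset\mathbb{T},\ |I|\ge m\}$.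
   Context: $\mathbb{T}=\{1,\ldots,N\}$. $X_I$ denotes the submatrix of $X$ formed by the columns indexed by $I$. $\lambda_{\min}(\cdot)$ is the smallest eigenvalue of a symmetric matrix. Genericity index: $\nu_n(X)$ is the smallest integer $m$ such that for every $\mathcal{S}\subset\mathbb{T}$ with $|\mathcal{S}|=m$, $\operatorname{rank}(X_{\mathcal{S}})=n$. *)

(* Defs.v *)
From HB Require Import structures.
From mathcomp Require Import all_boot all_order all_algebra.
From mathcomp Require Import boolp classical_sets reals.
Set Implicit Arguments. Unset Strict Implicit. Unset Printing Implicit Defensive.
Import Order.TTheory GRing.Theory Num.Theory.
Local Open Scope ring_scope.

Section Defs.
Variable R : realType.

(* X_I : the submatrix of X formed by the columns indexed by I (in increasing order). *)
Definition subcols (n N : nat) (X : 'M[R]_(n, N)) (I : {set 'I_N}) : 'M[R]_(n, #|I|) :=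
  colsub (fun k : 'I_#|I| => enum_val k) X.

Definition norm1 (k : nat) (v : 'cV[R]_k) : R := \sum_(i < k) `|v i 0|.
Definition norm2 (k : nat) (v : 'cV[R]_k) : R := Num.sqrt (\sum_(i < k) v i 0 ^+ 2).

(* m = nu_n(X): the smallest m such that every column subset of size m has rank n *)
Definition rank_n_all (n N : nat) (X : 'M[R]_(n, N)) (m : nat) : Prop :=
  forall S : {set 'I_N}, #|S| = m -> \rank (subcols X S) = n.
Definition is_genericity_index (n N : nat) (X : 'M[R]_(n, N)) (m : nat) : Prop :=
  rank_n_all X m /\ (forall m', rank_n_all X m' -> (m <= m')%N).

Definition lambda_min (n : nat) (A : 'M[R]_n) : R := inf [set a : R | eigenvalue A a]%classic.

Definition gfun (n N s m : nat) (X : 'M[R]_(n, N)) (L : 'M[R]_(n, s)) : R :=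
  inf [set v : R | exists J : 'I_s -> {set 'I_N},
        (forall i j, i != j -> @disjoint _ (mem (J i)) (mem (J j))) /\
        (forall i, (m <= #|J i|)%N) /\
        v = \sum_(i < s) norm1 ((subcols X (J i))^T *m col i L)]%classic.

Definition colnorm (n s : nat) (L : 'M[R]_(n, s)) : R := \sum_(i < s) norm2 (col i L).

Definition Dconst (n N s m : nat) (X : 'M[R]_(n, N)) : R :=
  inf [set v : R | exists L : 'M[R]_(n, s), colnorm L = 1 /\ v = gfun m X L]%classic.

Definition gamma (n N m : nat) (X : 'M[R]_(n, N)) : R :=
  inf [set v : R | exists (eta : 'cV[R]_n) (I : {set 'I_N}),
        norm2 eta = 1 /\ (m <= #|I|)%N /\ v = norm1 ((subcols X I)^T *m eta)]%classic.

Definition min_sqrt_lambda (n N m : nat) (X : 'M[R]_(n, N)) : R :=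
  inf [set v : R | exists I : {set 'I_N}, #|I| = m /\
        v = Num.sqrt (lambda_min (subcols X I *m (subcols X I)^T))]%classic.
End Defs.

(* Main.v *)
Require Import Defs.
From HB Require Import structures.
From mathcomp Require Import all_boot all_order all_algebra.
From mathcomp Require Import reals.

From mathcomp Require Import mxpoly mxred sesquilinear spectral complex.
From mathcomp Require Import ring zify.
From mathcomp Require Import boolp classical_sets.
Set Implicit Arguments. Unset Strict Implicit. Unset Printing Implicit Defensive.
Set Warnings "-notation-overridden -ambiguous-paths".
Import Order.TTheory GRing.Theory Num.Theory.
Local Open Scope ring_scope.
Section Ray.
Variable R : realType.
Local Notation C := (R[i]).
Local Notation f := (real_complex R).

Lemma realC_conj (x : R) : Num.conj (f x) = f x.
Proof. by apply: conj_Creal; apply/complex_realP; exists x. Qed.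

Lemma rayleigh n (A : 'M[R]_n) (v : 'rV[R]_n) :
  A^T = A -> (v *m v^T) 0 0 = 1 ->
  exists2 mu, eigenvalue A mu & mu <= (v *m A *m v^T) 0 0.
Proof.
move=> Asym v1.
set AC : 'M[C]_n := map_mx f A.
have hAC : (AC ^t* )%sesqui = AC.
  apply/matrixP=> i j; rewrite !mxE realC_conj.
  by rewrite -{1}Asym mxE.
have herm : AC \is hermsymmx.
  by apply/is_hermitianmxP; rewrite expr0 scale1r hAC.
have /orthomx_spectralP eqA := hermitian_normalmx herm.
have dreal := hermitian_spectral_diag_real herm.
set P := spectralmx AC in eqA.
set d := spectral_diag AC in eqA dreal.
have Pu : P \is unitarymx by apply: spectral_unitarymx.
have PPt : P *m (P ^t* )%sesqui = 1%:M by apply/unitarymxP.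
have PtP : (P ^t* )%sesqui *m P = 1%:M.
  by rewrite -invmx_unitary // mulVmx // unitarymx_unit.
rewrite invmx_unitary // in eqA.
have dR j : d 0 j = f (complex.Re (d 0 j)).
  by rewrite RRe_real //; move/mxOverP: dreal; apply.
have eigC j : eigenvalue AC (d 0 j).
  apply/eigenvalueP; exists (row j P).
    rewrite -row_mul eqA !mulmxA PPt mul1mx.
    apply/rowP=> k; rewrite !mxE (bigD1 j) //= big1 ?addr0 ?mxE ?eqxx // => i ne; rewrite !mxE eq_sym (negPf ne) mul0r.
    done.
  apply/negP=> /eqP rj0.
  have := congr1 (fun M : 'M[C]_n => M j j) PPt.
  rewrite !mxE eqxx /=.
  rewrite big1 => [/eqP|k _]; first by rewrite eq_sym oner_eq0.
  by have := congr1 (fun r : 'rV[C]_n => r 0 k) rj0; rewrite !mxE => ->; rewrite mul0r.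
have eig j : eigenvalue A (complex.Re (d 0 j)).
  move: (eigC j); rewrite {1}dR !eigenvalue_root_char => e.
  by rewrite -(fmorph_root f) map_char_poly.
have n0 : (0 < n)%N.
  by case: n A v v1 {Asym AC hAC herm eqA dreal P d Pu PPt PtP dR eigC eig} => // A v; rewrite !mxE big_ord0 => /eqP; rewrite eq_sym oner_eq0.
pose j0 := Ordinal n0.
case: (@Order.TotalTheory.arg_minP _ _ _ j0 xpredT (fun j => complex.Re (d 0 j))) => // jm _ hjm.
exists (complex.Re (d 0 jm)); first exact: eig.
set c := (v *m A *m v^T) 0 0.
set mu := complex.Re (d 0 jm).
pose w : 'rV[C]_n := map_mx f v.
have tC a b e (M : 'M[C]_(a,b)) (N : 'M[C]_(b,e)) :
   ((M *m N) ^t* )%sesqui = (N ^t* )%sesqui *m (M ^t* )%sesqui.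
  by rewrite trmx_mul map_mxM.
have wT : (w ^t* )%sesqui = map_mx f v^T.
  by apply/matrixP=> i k; rewrite !mxE realC_conj.
pose u := w *m (P ^t* )%sesqui.
have uT : (u ^t* )%sesqui = P *m (w ^t* )%sesqui by rewrite tC trmxCK.
have E1 : f c = (u *m diag_mx d *m (u ^t* )%sesqui) 0 0.
  have -> : u *m diag_mx d *m (u ^t* )%sesqui = w *m AC *m (w ^t* )%sesqui.
    by rewrite uT /u eqA !mulmxA.
  rewrite wT -map_mxM -map_mxM /c.
  by rewrite [in RHS]mxE.
have E2 : f 1 = (u *m (u ^t* )%sesqui) 0 0.
  have -> : u *m (u ^t* )%sesqui = w *m (w ^t* )%sesqui.
    by rewrite uT /u -mulmxA (mulmxA _ P) PtP mul1mx.
  by rewrite wT -map_mxM -v1 [in RHS]mxE.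
have ge0 : 0 <= f c - f mu.
  have -> : f mu = f mu * f 1 by rewrite (rmorph1 f) mulr1.
  rewrite E1 E2.
  rewrite !mxE mulr_sumr -sumrB; apply: sumr_ge0 => k _.
  have -> : (u *m diag_mx d) 0 k = u 0 k * d 0 k.
    rewrite !mxE (bigD1 k) //= big1 ?addr0 ?mxE ?eqxx ?mulr1n // => i ne.
    by rewrite !mxE (negPf ne) mulr0n mulr0.
  have uk : (u ^t* )%sesqui k 0 = Num.conj (u 0 k) by rewrite mxE [u^T _ _]mxE.
  rewrite !uk (mulrC (u 0 k)) -mulrA -mulrBl dR.
  apply: mulr_ge0; last exact: mul_conjC_ge0.
  have : 0 <= f (complex.Re (d 0 k) - mu) by rewrite ler0c subr_ge0 hjm.
  by rewrite rmorphB.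
have ge : 0 <= f (c - mu) by rewrite rmorphB.
by rewrite ler0c subr_ge0 in ge.
Qed.
End Ray.
Section P2.
Variable R : realType.

Lemma norm1_ge0 k (v : 'cV[R]_k) : 0 <= norm1 v.
Proof. by apply: sumr_ge0 => i _; exact: normr_ge0. Qed.

Lemma norm2_ge0 k (v : 'cV[R]_k) : 0 <= norm2 v.
Proof. exact: sqrtr_ge0. Qed.

Lemma subcolsT_mul n N (X : 'M[R]_(n, N)) I (eta : 'cV_n) k :
  ((subcols X I)^T *m eta) k 0 = (X^T *m eta) (enum_val k) 0.
Proof. by rewrite !mxE; apply: eq_bigr => j _; rewrite !mxE. Qed.

Lemma norm1_sub n N (X : 'M[R]_(n, N)) I (eta : 'cV_n) :
  norm1 ((subcols X I)^T *m eta) = \sum_(i in I) `|(X^T *m eta) i 0|.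
Proof.
rewrite /norm1 (big_enum_val (fun i => `|(X^T *m eta) i 0|)) /=.
by apply: eq_bigr => k _; rewrite subcolsT_mul.
Qed.

Lemma sum_subset_le (T : finType) (A B : {set T}) (F : T -> R) :
  A \subset B -> (forall i, 0 <= F i) -> \sum_(i in A) F i <= \sum_(i in B) F i.
Proof.
move=> AB F0; rewrite [X in _ <= X](big_setID A) /= (finset.setIidPr AB).
by rewrite lerDl sumr_ge0.
Qed.

Lemma sumsq_le (T : finType) (A : {set T}) (F : T -> R) :
  (forall i, 0 <= F i) -> \sum_(i in A) F i ^+ 2 <= (\sum_(i in A) F i) ^+ 2.
Proof.
move=> F0; rewrite expr2 mulr_suml; apply: ler_sum => i iA.
rewrite expr2 ler_wpM2l //; rewrite (bigD1 i) //= lerDl sumr_ge0 //.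
Qed.

Lemma rowsq (k : nat) (u : 'rV[R]_k) : (u *m u^T) 0 0 = \sum_j u 0 j ^+ 2.
Proof. by rewrite mxE; apply: eq_bigr => j _; rewrite mxE expr2. Qed.

Lemma quad n p (M : 'M[R]_(n, p)) (u : 'rV_n) :
  (u *m (M *m M^T) *m u^T) 0 0 = \sum_j (u *m M) 0 j ^+ 2.
Proof.
have e : M^T *m u^T = (u *m M)^T by rewrite trmx_mul.
by rewrite mulmxA -(mulmxA _ M^T) e rowsq.
Qed.

Lemma psd_eig n p (M : 'M[R]_(n, p)) a : eigenvalue (M *m M^T) a -> 0 <= a.
Proof.
move=> /eigenvalueP [u ua u0].
have := quad M u; rewrite ua -scalemxAl mxE rowsq => e.
have pos : 0 < \sum_j u 0 j ^+ 2.
  rewrite lt_def sumr_ge0 ?andbT => [|j _]; last exact: sqr_ge0.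
  apply/eqP => /psumr_eq0P h; move/negP: u0; apply; apply/eqP/rowP => j.
  by rewrite mxE; apply/eqP; rewrite -sqrf_eq0 h // => i _; exact: sqr_ge0.
by rewrite -(pmulr_lge0 _ pos) e sumr_ge0 // => j _; exact: sqr_ge0.
Qed.


Lemma sq_abs (x : R) : `|x| ^+ 2 = x ^+ 2.
Proof. exact: real_normK (num_real x). Qed.

Lemma lambda_min_le n p (M : 'M[R]_(n, p)) mu :
  eigenvalue (M *m M^T) mu -> lambda_min (M *m M^T) <= mu.
Proof.
move=> e; apply: (ge_inf _ e); exists 0 => a ea; exact: (psd_eig ea).
Qed.

Lemma lambda_min_ge0 n p (M : 'M[R]_(n, p)) : 0 <= lambda_min (M *m M^T).
Proof.
rewrite /lambda_min.
case: (pselect (exists a, eigenvalue (M *m M^T) a)) => [[a ea]|none].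
  by apply: lb_le_inf; [exists a | move=> b eb; exact: (psd_eig eb)].
suff -> : [set a : R | eigenvalue (M *m M^T) a]%classic = set0 by rewrite inf0.
by apply/funext => a; apply/propext; split => // ea; apply: none; exists a.
Qed.

Lemma key n N m (X : 'M[R]_(n, N)) (eta : 'cV_n) (I : {set 'I_N}) :
  norm2 eta = 1 -> (m <= #|I|)%N ->
  exists I0 : {set 'I_N}, #|I0| = m /\
    Num.sqrt (lambda_min (subcols X I0 *m (subcols X I0)^T))
      <= norm1 ((subcols X I)^T *m eta).
Proof.
move=> e1 /card_geqP [s [us ss sI]].
pose I0 := [set x in s].
have cI0 : #|I0| = m by rewrite cardsE; move/card_uniqP: us => ->.
have I0I : I0 \subset I by apply/fintype.subsetP => x; rewrite inE; exact: sI.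
exists I0; split => //.
pose M := subcols X I0.
pose y := X^T *m eta.
have v1 : (eta^T *m eta^T^T) 0 0 = 1.
  rewrite rowsq; move: e1; rewrite /norm2 => e1.
  have S0 : 0 <= \sum_(i < n) eta i 0 ^+ 2 by apply: sumr_ge0 => i _; exact: sqr_ge0.
  rewrite (eq_bigr (fun j => eta j 0 ^+ 2)) => [|j _]; last by rewrite mxE.
  by rewrite -(sqr_sqrtr S0) e1 expr1n.
have sym : (M *m M^T)^T = M *m M^T by rewrite trmx_mul trmxK.
have [mu emu lemu] := rayleigh sym v1.
rewrite quad in lemu.
have Q : \sum_j (eta^T *m M) 0 j ^+ 2 = \sum_(i in I0) `|y i 0| ^+ 2.
  rewrite (big_enum_val (fun i => `|y i 0| ^+ 2)) /=.
  apply: eq_bigr => k _; rewrite sq_abs -subcolsT_mul.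
  by congr (_ ^+ 2); rewrite !mxE; apply: eq_bigr => j _; rewrite !mxE mulrC.
rewrite Q in lemu.
have := lambda_min_le emu => lam.
rewrite norm1_sub -[X in _ <= X]ger0_norm ?sumr_ge0 // -sqrtr_sqr.
apply: ler_wsqrtr; apply: (le_trans lam); apply: (le_trans lemu).
apply: (le_trans (sumsq_le _ _)) => //.
rewrite ler_sqr ?nnegrE ?sumr_ge0 //.
by apply: (@sum_subset_le _ I0 I (fun i => `|y i 0|) I0I) => i; exact: normr_ge0.
Qed.

Lemma inf_ge0 (E : set R) : (forall x, E x -> 0 <= x) -> 0 <= inf E.
Proof.
move=> h; case: (pselect (exists x, E x)) => [[x ex]|none].
  by apply: lb_le_inf; [exists x | exact: h].
suff -> : E = set0 by rewrite inf0.
by apply/funext => a; apply/propext; split => // ea; apply: none; exists a.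
Qed.

Lemma norm2Z k (v : 'cV[R]_k) c : norm2 (c *: v) = `|c| * norm2 v.
Proof.
rewrite /norm2 -sqrtr_sqr -sqrtrM ?sqr_ge0 // mulr_sumr.
by congr Num.sqrt; apply: eq_bigr => i _; rewrite mxE exprMn.
Qed.

Lemma norm1Z p k (M : 'M[R]_(p, k)) (v : 'cV[R]_k) c :
  norm1 (M *m (c *: v)) = `|c| * norm1 (M *m v).
Proof.
rewrite /norm1 mulr_sumr; apply: eq_bigr => i _.
by rewrite -scalemxAr mxE normrM.
Qed.

Lemma norm2_eq0 k (v : 'cV[R]_k) : norm2 v = 0 -> v = 0.
Proof.
rewrite /norm2 => /eqP; rewrite sqrtr_eq0 => h.
have h0 : \sum_(i < k) v i 0 ^+ 2 = 0.
  by apply/eqP; rewrite eq_le h sumr_ge0 // => i _; exact: sqr_ge0.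
apply/colP => i; rewrite mxE; apply/eqP; rewrite -sqrf_eq0.
by apply/eqP; apply: (psumr_eq0P _ h0) => // j _; exact: sqr_ge0.
Qed.

Section G.
Variables (n N m : nat) (X : 'M[R]_(n, N)).

Lemma gamma_ge0 : 0 <= gamma m X.
Proof.
apply: inf_ge0 => x [eta [I [_ [_ ->]]]]; exact: norm1_ge0.
Qed.

Lemma gamma_le (eta : 'cV_n) (I : {set 'I_N}) :
  norm2 eta = 1 -> (m <= #|I|)%N -> gamma m X <= norm1 ((subcols X I)^T *m eta).
Proof.
move=> e1 hI; apply: ge_inf; last by exists eta, I.
exists 0 => x [eta' [I' [_ [_ ->]]]]; exact: norm1_ge0.
Qed.

Lemma gamma_hom (eta : 'cV_n) (I : {set 'I_N}) :
  (m <= #|I|)%N -> gamma m X * norm2 eta <= norm1 ((subcols X I)^T *m eta).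
Proof.
move=> hI; have [e0|e0] := eqVneq (norm2 eta) 0.
  by rewrite e0 mulr0 norm1_ge0.
have pos : 0 < norm2 eta by rewrite lt_def e0 norm2_ge0.
have e1 : norm2 ((norm2 eta)^-1 *: eta) = 1.
  by rewrite norm2Z ger0_norm ?invr_ge0 ?norm2_ge0 // mulVf.
have := gamma_le e1 hI; rewrite norm1Z ger0_norm ?invr_ge0 ?norm2_ge0 //.
by rewrite ler_pdivlMl // mulrC.
Qed.
End G.

Lemma lt_idx s m N (hN : (s * m <= N)%N) (i : 'I_s) (k : 'I_m) : (i * m + k < N)%N.
Proof.
have := ltn_ord i; have := ltn_ord k => hk hi.
have : (i.+1 * m <= s * m)%N by rewrite leq_mul2r hi orbT.
rewrite mulSn; lia.
Qed.

Definition blk s m N (hN : (s * m <= N)%N) (i : 'I_s) : {set 'I_N} :=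
  [set Ordinal (lt_idx hN i k) | k : 'I_m].

Lemma blk_card s m N (hN : (s * m <= N)%N) i : #|blk hN i| = m.
Proof.
rewrite card_imset ?card_ord // => k k' /(congr1 val) /= e.
by apply: val_inj => /=; move: e => /eqP; rewrite eqn_add2l => /eqP.
Qed.

Lemma blk_disj s m N (hN : (s * m <= N)%N) (i j : 'I_s) :
  i != j -> [disjoint blk hN i & blk hN j].
Proof.
move=> ij; apply/pred0P => x /=; apply/negP => /andP [].
move=> /imsetP [k _ ->] /imsetP [k' _ /(congr1 val) /= e].
have m0 : (0 < m)%N by apply: (leq_ltn_trans _ (ltn_ord k)).
have := congr1 (fun t => t %/ m)%N e => /=.
rewrite !divnMDl // !divn_small // !addn0 => /val_inj eij.
by rewrite eij eqxx in ij.
Qed.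

Lemma gfun_ge s m n N (X : 'M[R]_(n, N)) (L : 'M[R]_(n, s)) :
  (s * m <= N)%N -> gamma m X * colnorm L <= gfun m X L.
Proof.
move=> hN; apply: lb_le_inf.
  exists (\sum_(i < s) norm1 ((subcols X (blk hN i))^T *m col i L)).
  exists (blk hN); split; first exact: blk_disj.
  by split => // i; rewrite blk_card.
move=> x [J [_ [hJ ->]]]; rewrite /colnorm mulr_sumr; apply: ler_sum => i _.
exact: gamma_hom.
Qed.

Lemma gfun_ge0 s m n N (X : 'M[R]_(n, N)) (L : 'M[R]_(n, s)) : 0 <= gfun m X L.
Proof. by apply: inf_ge0 => x [J [_ [_ ->]]]; apply: sumr_ge0 => i _; exact: norm1_ge0. Qed.


Lemma inf_le0 (E : set R) : (forall x, E x -> x = 0) -> inf E <= 0.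
Proof.
move=> h; case: (pselect (exists x, E x)) => [[x ex]|none].
  rewrite -(h x ex); apply: ge_inf => //; exists 0 => y ey; by rewrite (h y ey).
suff -> : E = set0 by rewrite inf0.
by apply/funext => a; apply/propext; split => // ea; apply: none; exists a.
Qed.

Lemma norm2_delta n s (i0 : 'I_n) (j0 j : 'I_s) :
  norm2 (col j (delta_mx i0 j0 : 'M[R]_(n, s))) = (j == j0)%:R.
Proof.
rewrite /norm2 (bigD1 i0) //= big1 => [|k nk]; last by rewrite !mxE (negPf nk) /= expr0n.
rewrite !mxE eqxx /= addr0.
by case: (j == j0); rewrite ?expr1n ?sqrtr1 // expr0n /= sqrtr0.
Qed.

Lemma norm2_e n (i0 : 'I_n) : norm2 (delta_mx i0 0 : 'cV[R]_n) = 1.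
Proof.
rewrite /norm2 (bigD1 i0) //= big1 => [|k nk]; last by rewrite !mxE (negPf nk) /= expr0n.
by rewrite !mxE !eqxx /= addr0 expr1n sqrtr1.
Qed.

Lemma colnorm_delta n s (i0 : 'I_n) (j0 : 'I_s) :
  colnorm (delta_mx i0 j0 : 'M[R]_(n, s)) = 1.
Proof.
rewrite /colnorm (bigD1 j0) //= big1 => [|j nj]; last by rewrite norm2_delta (negPf nj).
by rewrite norm2_delta eqxx addr0.
Qed.

End P2.

Theorem lemma8 (R : realType) (n N s m : nat) (X : 'M[R]_(n, N))
  (hrank : \rank X = n) (hm : is_genericity_index X m)
  (hs : (0 < s)%N) (hN : (s * m <= N)%N) :
  gamma m X <= Dconst s m X /\ min_sqrt_lambda m X <= gamma m X.
Proof.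
have mN : (m <= N)%N by apply: leq_trans hN; rewrite leq_pmull.
case: n X hrank hm => [|n'] X hrank hm.
  have g0 : gamma m X = 0.
    rewrite /gamma; suff -> : [set v : R | exists (eta : 'cV[R]_0) (I : {set 'I_N}),
        norm2 eta = 1 /\ (m <= #|I|)%N /\ v = norm1 ((subcols X I)^T *m eta)]%classic = set0
      by rewrite inf0.
    apply/funext => v; apply/propext; split => // [[eta [I [e1 _]]]].
    by move: e1; rewrite /norm2 big_ord0 sqrtr0 => /eqP; rewrite eq_sym oner_eq0.
  rewrite g0; split.
    by apply: inf_ge0 => x [L [_ ->]]; exact: gfun_ge0.
  apply: inf_le0 => x [I [_ ->]].
  suff -> : lambda_min (subcols X I *m (subcols X I)^T) = 0 by rewrite sqrtr0.
  rewrite /lambda_min; suff -> : [set a : R | eigenvalue (subcols X I *m (subcols X I)^T) a]%classic = set0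
    by rewrite inf0.
  apply/funext => a; apply/propext; split => // /eigenvalueP [u _ nz].
  by move: nz; rewrite (thinmx0 u) eqxx.

split.
  apply: lb_le_inf.
    exists (gfun m X (delta_mx (0 : 'I_n'.+1) (Ordinal hs))).
    by exists (delta_mx 0 (Ordinal hs)); rewrite colnorm_delta.
  by move=> x [L [cL ->]]; have := gfun_ge X L hN; rewrite cL mulr1.
apply: lb_le_inf.
  exists (norm1 ((subcols X [set: 'I_N]%SET)^T *m (delta_mx 0 0 : 'cV[R]_n'.+1))).
  exists (delta_mx 0 0), [set: 'I_N]%SET; split.
    exact: norm2_e.
  by split => //; rewrite cardsT card_ord.
move=> x [eta [I [e1 [hI ->]]]]; have [I0 [c0 le]] := key X e1 hI.
apply: le_trans le; apply: ge_inf; last by exists I0.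
by exists 0 => y [I' [_ ->]]; exact: sqrtr_ge0.
Qed.
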